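(* Let $G$ be a finite connected undirected weighted graph, unknown to the agents, with edge weights $w_e>0$ and $L=\sum_{e}w_e$. Two agents starting at the same node and both executing navigation table $T_{\mathrm{explo}}$ (described in the context) in the asynchronous model perform collective exploration of $G$ (every edge is traversed) while paying a total cost of at most $2L$, where traversing edge $e$ costs $w_e$.
   Context: Model. A passage (port) is an endpoint of an edge at one of its nodes. Each passage carries one marker; initially all passages are unmarked ($\emptyset$). The graph is unlabelled; an agent sees only the markers at its current node and remembers only the passage by which it arrived. A move of an agent at $u$: choose a passage at $u$ (or stop), possibly change its marker, traverse the edge to $v$, read the markers at $v$, possibly change the marker of the arrival passage. In the asynchronous model an adversary chooses, at each round, which agent performs a whole move. Navigation tables: ordered rows $(p_u,p_u',p_v,p_v')$; the agent takes the first row such that some passage at $u$ has marker $p_u$ (rows with equal $p_u$ are distinguished after arrival by the $p_v$ condition), sets that passage's marker to $p_u'$, traverses it, and sets the arrival passage's marker to $p_v'$; dash means any/unchanged; if no row applies the agent stops. A node is ''discovered'' if visited before. Table $T_{\mathrm{explo}}$ (priority order): (1) B, D, -, D; (2) $\emptyset$, E, E (arrival passage marked E), D; (3) $\emptyset$, E, $v$ discovered, B; (4) $\emptyset$, E, $v$ undiscovered, F; (5) F, D, -, D; (6) E, D, -, D. *)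

(* Defs.v *)
From HB Require Import structures.
From mathcomp Require Import all_boot all_order all_algebra.
Set Implicit Arguments. Unset Strict Implicit. Unset Printing Implicit Defensive.
Import Order.TTheory GRing.Theory Num.Theory.
Local Open Scope ring_scope.

(* Markers carried by passages: empty, E, D, B, F. *)
Inductive marker := M0 | ME | MD | MB | MF.

Notation agent := bool.

Section Explo.
Variable R : realFieldType.
Variable T : finType.
Variable adj : rel T.          (* simple undirected graph: symmetric, irreflexive *)
Variable w : {set T} -> R.     (* weight of the edge {u,v} *)

(* The passage at u leading to v (for adj u v) is identified with (u,v);
   mk u v is its marker. *)
Record state := State {
  pos : agent -> T;
  halted : agent -> bool;
  mk : T -> T -> marker;
  visited : {set T};
  explored : {set {set T}};
  cost : R
}.

Definition edge_set : {set {set T}} :=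
  [set [set x.1; x.2] | x : T * T & adj x.1 x.2].

Definition total_weight : R := \sum_(e in edge_set) w e.

Definition init (start : T) : state :=
  State (fun _ => start) (fun _ => false) (fun _ _ => M0) [set start] set0 0.

Definition has_mk (s : state) (u : T) (x : marker) : Prop :=
  exists v, adj u v /\ mk s u v = x.

Definition upd (m : T -> T -> marker) (u v : T) (x : marker) :=
  fun a b => if (a == u) && (b == v) then x else m a b.

Definition move (s : state) (a : agent) (v : T) (mu mv : marker) : state :=
  let u := pos s a in
  State (fun b => if b == a then v else pos s b)
        (halted s)
        (upd (upd (mk s) u v mu) v u mv)
        (v |: visited s)
        ([set u; v] |: explored s)
        (cost s + w [set u; v]).

Definition halt (s : state) (a : agent) : state :=
  State (pos s) (fun b => if b == a then true else halted s b)
        (mk s) (visited s) (explored s) (cost s).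

(* One whole move of agent a following the navigation table T_explo,
   rows tried in priority order (1)-(6). *)
Inductive step (a : agent) (s : state) : state -> Prop :=
| step_halted : halted s a -> step a s s
| step_row1 v : ~~ halted s a -> adj (pos s a) v -> mk s (pos s a) v = MB ->
    step a s (move s a v MD MD)
| step_row2 v : ~~ halted s a -> ~ has_mk s (pos s a) MB ->
    adj (pos s a) v -> mk s (pos s a) v = M0 -> mk s v (pos s a) = ME ->
    step a s (move s a v ME MD)
| step_row3 v : ~~ halted s a -> ~ has_mk s (pos s a) MB ->
    adj (pos s a) v -> mk s (pos s a) v = M0 -> mk s v (pos s a) <> ME ->
    v \in visited s ->
    step a s (move s a v ME MB)
| step_row4 v : ~~ halted s a -> ~ has_mk s (pos s a) MB ->
    adj (pos s a) v -> mk s (pos s a) v = M0 -> mk s v (pos s a) <> ME ->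
    v \notin visited s ->
    step a s (move s a v ME MF)
| step_row5 v : ~~ halted s a -> ~ has_mk s (pos s a) MB ->
    ~ has_mk s (pos s a) M0 ->
    adj (pos s a) v -> mk s (pos s a) v = MF ->
    step a s (move s a v MD MD)
| step_row6 v : ~~ halted s a -> ~ has_mk s (pos s a) MB ->
    ~ has_mk s (pos s a) M0 -> ~ has_mk s (pos s a) MF ->
    adj (pos s a) v -> mk s (pos s a) v = ME ->
    step a s (move s a v MD MD)
| step_stop : ~~ halted s a -> ~ has_mk s (pos s a) MB ->
    ~ has_mk s (pos s a) M0 -> ~ has_mk s (pos s a) MF ->
    ~ has_mk s (pos s a) ME ->
    step a s (halt s a).

End Explo.

(* Main.v *)
Require Import Defs.
From HB Require Import structures.
From mathcomp Require Import all_boot all_order all_algebra.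
From mathcomp Require Import zify ring lra.
From Stdlib Require Import Classical.
Import Order.TTheory GRing.Theory Num.Theory.

Section Proof.
Variable R : realFieldType.
Variable T : finType.
Variable adj : rel T.
Variable w : {set T} -> R.
Hypothesis adj_sym : symmetric adj.
Hypothesis adj_irr : irreflexive adj.

Local Notation st := (state R T).

Definition phase (x : marker) : nat :=
  match x with M0 => 0 | MD => 2 | _ => 1 end.

Definition edge_ok (x y : marker) : bool :=
  match x, y with
  | M0, M0 | ME, MB | MB, ME | ME, MF | MF, ME | MD, MD => true
  | _, _ => false end.

Definition isB (x : marker) : bool := if x is MB then true else false.
Definition nB (s : st) (u : T) : nat := \sum_(y : T) isB (mk s u y).
Definition nh (s : st) (u : T) : nat :=
  ((pos s true == u) && ~~ halted s true) + ((pos s false == u) && ~~ halted s false).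
Definition inV (s : st) (y : T) : Prop := (exists z, mk s z y = MB) \/ (nB s y < nh s y).
Definition tptr (s : st) (x y : T) : Prop := mk s x y = ME /\ mk s y x = MF.
Inductive reach (e : T -> T -> Prop) : T -> T -> Prop :=
| rrefl x : reach e x x
| rstep x y z : e x y -> reach e y z -> reach e x z.
Definition unf (s : st) (x : T) : Prop :=
  x \in visited s /\ exists y, adj x y /\ mk s x y <> MD.
Definition Ssum (s : st) : R :=
  (\sum_(x : T * T | adj x.1 x.2) w [set x.1; x.2] * (phase (mk s x.1 x.2))%:R)%R.
Definition Phi (s : st) : nat :=
  \sum_(x : T * T) phase (mk s x.1 x.2) + halted s true + halted s false.

Record Inv (s : st) : Prop := {
  i1 : forall a, pos s a \in visited s;
  i2 : forall x y, mk s x y <> M0 ->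
         [/\ adj x y, x \in visited s, y \in visited s & [set x; y] \in explored s];
  i3 : forall x y, adj x y -> edge_ok (mk s x y) (mk s y x);
  i5 : forall x y z, mk s x y = MF -> mk s x z = MF -> y = z;
  i6 : forall u, nB s u <= nh s u;
  i7 : forall x, unf s x -> exists y, reach (tptr s) x y /\ inV s y;
  i8 : (2 * cost s = Ssum s)%R }.
Arguments i1 [s]. Arguments i2 [s]. Arguments i3 [s]. Arguments i5 [s].
Arguments i6 [s]. Arguments i7 [s]. Arguments i8 [s].

Lemma reach_mono (e e' : T -> T -> Prop) x y :
  (forall a b, e a b -> e' a b) -> reach e x y -> reach e' x y.
Proof.
move=> H; elim=> [z|p q r Hpq _ IH]; first exact: rrefl.
exact: rstep (H _ _ Hpq) IH.
Qed.

Arguments reach_mono [e e' x y].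
Lemma reach_snoc (e : T -> T -> Prop) x y z : reach e x y -> e y z -> reach e x z.
Proof.
move=> H; elim: H z => [p|p q r Hpq _ IH] z H.
  exact: rstep H (rrefl _ _).
exact: rstep Hpq (IH _ H).
Qed.

Lemma reachL1 (e e' : T -> T -> Prop) p q x y :
  (forall a b, e a b -> e' a b \/ (a = p /\ b = q)) ->
  reach e x y -> reach e' x y \/ reach e' x p.
Proof.
move=> H; elim=> [z|a b c Hab _ [IH|IH]]; first by left; apply: rrefl.
- case: (H _ _ Hab) => [Hab'|[-> _]]; [left; exact: rstep Hab' IH | right; exact: rrefl].
- case: (H _ _ Hab) => [Hab'|[-> _]]; [right; exact: rstep Hab' IH | right; exact: rrefl].
Qed.

Arguments reachL1 [e e' p q x y].
Lemma reachL2 (e e' : T -> T -> Prop) p q t x :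
  (forall a b, e a b -> e' a b \/ (a = p /\ b = q)) ->
  (forall a, e a t -> a = p) -> reach e x t -> x = t \/ reach e' x p.
Proof.
move=> H Hin R0.
have: forall y, reach e x y -> y = t -> x = t \/ reach e' x p.
  move=> y; elim=> [z -> |a b c Hab _ IH Hc]; first by left.
  case: (IH Hc) => [Hb|Hb].
  - subst b; right; rewrite (Hin _ Hab); exact: rrefl.
  - case: (H _ _ Hab) => [Hab'|[-> _]]; right; [exact: rstep Hab' Hb | exact: rrefl].
by move/(_ t R0 erefl).
Qed.

Lemma reachL3 (e : T -> T -> Prop) t x : (forall a, ~ e a t) -> reach e x t -> x = t.
Proof.
move=> Hin R0.
have: forall y, reach e x y -> y = t -> x = t.
  move=> y; elim=> [z -> //|a b c Hab _ IH Hc].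
  by move: Hab; rewrite (IH Hc) => /Hin.
by move/(_ t R0 erefl).
Qed.

Lemma generic_loss (e e' : T -> T -> Prop) (V V' unf0 unf1 : T -> Prop) u p q :
  (forall x, unf0 x -> exists y, reach e x y /\ V y) ->
  (forall a b, e a b -> e' a b \/ (a = p /\ b = q)) ->
  (forall a b, e' a b -> e a b) ->
  (forall a, e a u -> a = p /\ p <> u) ->
  (V' p \/ p = u) ->
  (forall y, V y -> V' y \/ y = u) ->
  (forall x, unf1 x -> unf0 x) ->
  (unf1 u -> V' u \/ exists c, [/\ e' u c, unf0 c & c <> u]) ->
  forall x, unf1 x -> exists y, reach e' x y /\ V' y.
Proof.
move=> H7 He He'e Hin Hp HV Hunf Hu.
have Hcase : forall z, reach e' z p -> (exists y, reach e' z y /\ V' y) \/ z = u.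
  move=> z Hz; case: Hp => [Hp|Hp]; first by left; exists p.
  right; subst p; apply: (@reachL3 e); last exact: reach_mono Hz.
  by move=> a /Hin [].
have Hu' : forall z, reach e' z u -> (exists y, reach e' z y /\ V' y) \/ z = u.
  move=> z Hz.
  have Hin' : forall a, e a u -> a = p by move=> a /Hin [].
  case: (@reachL2 e e' p q u z He Hin' (reach_mono He'e Hz)) => [->|]; first by right.
  exact: Hcase.
have ClA : forall z, unf0 z -> (exists y, reach e' z y /\ V' y) \/ z = u.
  move=> z /H7 [y [Hzy Vy]].
  case: (reachL1 He Hzy) => [Hr|Hr]; last exact: Hcase.
  case: (HV _ Vy) => [V'y|Eyu]; first by left; exists y.
  subst y; exact: Hu'.
move=> x /[dup] Hx1 /Hunf /ClA [//|Exu]; subst x.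
case: (Hu Hx1) => [V'u|[c [Huc Hc Hcu]]]; first by exists u; split=> //; apply: rrefl.
case: (ClA _ Hc) => [[y [Hcy V'y]]|//].
by exists y; split=> //; apply: rstep Huc Hcy.
Qed.


Lemma adj_neq x y : adj x y -> x != y.
Proof. by apply: contraTneq => ->; rewrite adj_irr. Qed.
Arguments adj_neq [x y].

Lemma pair_cases (u v x y : T) :
  (x = u /\ y = v) \/ (x = v /\ y = u) \/
  (~~ ((x == u) && (y == v)) /\ ~~ ((x == v) && (y == u))).
Proof.
case: (boolP ((x == u) && (y == v))) => [/andP [/eqP -> /eqP ->]|H1]; first by left.
case: (boolP ((x == v) && (y == u))) => [/andP [/eqP -> /eqP ->]|H2]; first by right; left.
by right; right.
Qed.

Lemma sum_upd (f g : T -> nat) v :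
  (forall y, y != v -> f y = g y) -> \sum_y f y + g v = \sum_y g y + f v.
Proof.
move=> H; rewrite (bigD1 v) //= [in RHS](bigD1 v) //=.
rewrite (eq_bigr g) => [|y /H //]; lia.
Qed.

Lemma nohas (s : st) u x y : ~ has_mk adj s u x -> adj u y -> mk s u y <> x.
Proof. by move=> H Hy E; apply: H; exists y. Qed.

Lemma nB0 (s : st) u : (forall y, mk s u y <> MB) -> nB s u = 0.
Proof. move=> H; rewrite /nB big1 // => y _; by case: (mk s u y) (H y). Qed.

Lemma nB_pos (s : st) u y : mk s u y = MB -> 0 < nB s u.
Proof. by move=> H; rewrite /nB (bigD1 y) //= H /= add1n. Qed.

Lemma nB0_inv (s : st) u : Inv s -> ~ has_mk adj s u MB -> nB s u = 0.
Proof.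
move=> I H; apply: nB0 => y E.
case: (i2 I u y) => [|Hy _ _ _]; first by rewrite E.
exact: nohas H Hy E.
Qed.

Section Move.
Variables (s : st) (a : agent) (u v : T) (mu mv : marker).
Hypothesis Hu : pos s a = u.
Hypothesis Hadj : adj u v.
Hypothesis Hna : ~~ halted s a.
Let s' := move w s a v mu mv.

Lemma uv_neq : u != v.
Proof. exact: adj_neq. Qed.

Lemma vu_neq : v != u.
Proof. by rewrite eq_sym uv_neq. Qed.

Lemma mk_m x y : mk s' x y =
  if (x == v) && (y == u) then mv else if (x == u) && (y == v) then mu else mk s x y.
Proof. by rewrite /s' /move /upd /= Hu. Qed.

Lemma mk_uv : mk s' u v = mu.
Proof. by rewrite mk_m (negbTE uv_neq) /= !eqxx. Qed.

Lemma mk_vu : mk s' v u = mv.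
Proof. by rewrite mk_m !eqxx. Qed.

Lemma mk_oth x y : ~~ ((x == u) && (y == v)) -> ~~ ((x == v) && (y == u)) ->
  mk s' x y = mk s x y /\ mk s' y x = mk s y x.
Proof.
move=> H1 H2; rewrite !mk_m (negbTE H1) (negbTE H2).
by rewrite andbC (negbTE H1) andbC (negbTE H2).
Qed.

Lemma nh_m y : nh s' y + (u == y) = nh s y + (v == y).
Proof.
rewrite /nh /s' /move /=; rewrite -Hu; move: Hna.
case: a => /= ->; rewrite ?andbT; lia.
Qed.

Lemma nh_pos : 0 < nh s u.
Proof. rewrite /nh -Hu; move: Hna; case: a => /= ->; rewrite eqxx /=; lia. Qed.

Lemma nB_oth x : x != u -> x != v -> nB s' x = nB s x.
Proof.
move=> H1 H2; rewrite /nB; apply: eq_bigr => y _; rewrite mk_m.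
by rewrite (negbTE H1) (negbTE H2).
Qed.

Lemma nB_u : nB s' u + isB (mk s u v) = nB s u + isB mu.
Proof.
rewrite /nB -mk_uv; apply: sum_upd => y Hy.
by rewrite mk_m (negbTE uv_neq) /= eqxx /= (negbTE Hy).
Qed.

Lemma nB_v : nB s' v + isB (mk s v u) = nB s v + isB mv.
Proof.
rewrite /nB -mk_vu; apply: sum_upd => y Hy.
by rewrite mk_m eqxx /= (negbTE Hy) (negbTE vu_neq).
Qed.

Lemma i6_m : Inv s ->
  nB s u + isB mu + 1 <= nh s u + isB (mk s u v) ->
  nB s v + isB mv <= nh s v + 1 + isB (mk s v u) ->
  forall x, nB s' x <= nh s' x.
Proof.
move=> I Au Av x.
have Huv := uv_neq.
have := nh_m x.
case: (x =P u) => [->|Hxu].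
  rewrite eqxx (negbTE vu_neq) => Hn; have := nB_u; have := i6 I u; lia.
case: (x =P v) => [->|Hxv].
  rewrite eqxx (negbTE Huv) => Hn; have := nB_v; have := i6 I v; lia.
rewrite nB_oth; try by apply/eqP.
have := i6 I x.
have -> : (u == x) = false by apply/eqP => E; apply: Hxu.
have -> : (v == x) = false by apply/eqP => E; apply: Hxv.
lia.
Qed.

Lemma nBnh_oth y : y != u -> y != v -> (nB s' y < nh s' y) = (nB s y < nh s y).
Proof.
move=> H1 H2; rewrite nB_oth //; have := nh_m y.
by rewrite [u == y]eq_sym (negbTE H1) [v == y]eq_sym (negbTE H2) !addn0 => ->.
Qed.

Lemma V'v : Inv s -> ~~ isB mv -> inV s' v.
Proof.
move=> I Hmv; right; have := nB_v; have := nh_m v; have := i6 I v.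
rewrite eqxx (negbTE uv_neq) (negbTE Hmv); lia.
Qed.

Lemma unf_m x : v \in visited s -> mk s u v <> MD -> mk s v u <> MD ->
  unf s' x -> unf s x.
Proof.
move=> Hv H1 H2 [Hx [y [Hxy Hm]]]; split.
  by move: Hx; rewrite /s' /move /= in_setU1 => /orP [/eqP ->|].
case: (pair_cases u v x y) => [[? ?]|[[? ?]|[Ha Hb]]]; try subst x y.
- by exists v.
- by exists u; rewrite adj_sym.
- by exists y; split=> //; case: (@mk_oth x y Ha Hb) Hm => ->.
Qed.


Lemma mk_u y : mk s' u y = if y == v then mu else mk s u y.
Proof. by rewrite mk_m (negbTE uv_neq) eqxx. Qed.

Lemma mk_v y : mk s' v y = if y == u then mv else mk s v y.
Proof. by rewrite mk_m (negbTE vu_neq) eqxx /=; case: (y == u). Qed.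

Lemma mk_x x y : x != u -> x != v -> mk s' x y = mk s x y.
Proof. by move=> H1 H2; rewrite mk_m (negbTE H1) (negbTE H2). Qed.

Lemma mk_m' x y : upd (upd (mk s) (pos s a) v mu) v (pos s a) mv x y = mk s' x y.
Proof. by []. Qed.

Lemma Ssum_m : phase mu = (phase (mk s u v)).+1 -> phase mv = (phase (mk s v u)).+1 ->
  Ssum s' = (Ssum s + 2 * w [set u; v])%R.
Proof.
move=> P1 P2; rewrite /Ssum.
under eq_bigr do rewrite mk_m.
have Hvu : adj v u && ((v, u) != (u, v)).
  by rewrite adj_sym Hadj /= xpair_eqE (negbTE vu_neq).
rewrite (bigD1 (u,v)) //= [in RHS](bigD1 (u,v)) //=.
rewrite (bigD1 (v,u)) //= [in RHS](bigD1 (v,u)) //=.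
rewrite (negbTE vu_neq) (negbTE uv_neq) !eqxx /= P1 P2 [[set v; u]]setUC.
rewrite (eq_bigr (fun x : T * T => w [set x.1; x.2] * (phase (mk s x.1 x.2))%:R)%R); last first.
  case=> x1 x2 /= /andP [/andP [_ H1] H2].
  by move: H1 H2; rewrite !xpair_eqE => H1 H2; rewrite (negbTE H1) (negbTE H2).
rewrite -[(phase (mk s u v)).+1]addn1 -[(phase (mk s v u)).+1]addn1 !natrD.
ring.
Qed.


Lemma sum_lt (f g : T * T -> nat) x0 :
  (forall x, f x <= g x) -> f x0 < g x0 -> \sum_x f x < \sum_x g x.
Proof.
move=> H H0; rewrite (bigD1 x0) //= [X in _ < X](bigD1 x0) //=.
have : \sum_(i | i != x0) f i <= \sum_(i | i != x0) g i by apply: leq_sum.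
by move=> Hs; rewrite -addSn; apply: leq_add.
Qed.

Lemma Phi_m : Inv s -> phase mu = (phase (mk s u v)).+1 ->
  phase mv = (phase (mk s v u)).+1 -> Phi s < Phi s'.
Proof.
move=> I P1 P2; rewrite /Phi.
suff : \sum_(x : T * T) phase (mk s x.1 x.2) < \sum_(x : T * T) phase (mk s' x.1 x.2).
  rewrite /s' /move /=; lia.
under [X in _ < X]eq_bigr do rewrite mk_m.
apply: (@sum_lt _ _ (u, v)); last by rewrite /= (negbTE uv_neq) !eqxx /= P1.
case=> x1 x2 /=.
case: (pair_cases u v x1 x2) => [[? ?]|[[? ?]|[Ha Hb]]]; try subst x1 x2.
- by rewrite (negbTE uv_neq) !eqxx /= P1.
- by rewrite !eqxx /= P2.
- by rewrite (negbTE Ha) (negbTE Hb).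
Qed.

Lemma edge_ok_sym x y : edge_ok x y = edge_ok y x.
Proof. by case: x; case: y. Qed.

Lemma move_Inv : Inv s -> mu <> M0 -> mv <> M0 -> edge_ok mu mv ->
  phase mu = (phase (mk s u v)).+1 -> phase mv = (phase (mk s v u)).+1 ->
  mu <> MF -> (mv = MF -> forall z, mk s v z <> MF) ->
  (forall x, nB s' x <= nh s' x) ->
  (forall x, unf s' x -> exists y, reach (tptr s') x y /\ inV s' y) ->
  Inv s'.
Proof.
move=> I Hmu Hmv Hok P1 P2 HmuF HmvF H6 H7.
have Hvis : visited s' = v |: visited s by [].
have Hex : explored s' = [set u; v] |: explored s by rewrite /s' /move /= Hu.
split=> //.
- move=> b; rewrite Hvis /s' /move /=; case: (b == a); first by rewrite setU11.
  by rewrite in_setU1 (i1 I) ?orbT.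
- move=> x y; rewrite Hvis Hex.
  case: (pair_cases u v x y) => [[? ?]|[[? ?]|[Ha Hb]]]; try subst x y.
  + move=> _; split.
    * exact: Hadj.
    * by rewrite in_setU1 -Hu (i1 I) orbT.
    * by rewrite setU11.
    * by rewrite setU11.
  + move=> _; split.
    * by rewrite adj_sym.
    * by rewrite setU11.
    * by rewrite in_setU1 -Hu (i1 I) orbT.
    * by rewrite setUC setU11.
  + case: (@mk_oth x y Ha Hb) => -> _ /(i2 I) [H1 H2 H3 H4].
    by split=> //; rewrite in_setU1 ?H2 ?H3 ?H4 orbT.
- move=> x y Hxy.
  case: (pair_cases u v x y) => [[? ?]|[[? ?]|[Ha Hb]]]; try subst x y.
  + by rewrite mk_uv mk_vu.
  + by rewrite mk_uv mk_vu edge_ok_sym.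
  + by case: (@mk_oth x y Ha Hb) => -> ->; apply: (i3 I).
- move=> x y z.
  case: (x =P v) => [->|Hxv].
    rewrite !mk_v; case: (y =P u) => [->|Hyu]; case: (z =P u) => [->|Hzu] //.
    + by move=> /HmvF H /H.
    + by move=> H /HmvF /(_ y).
    + exact: (i5 I).
  case: (x =P u) => [->|Hxu].
    rewrite !mk_u; case: (y =P v) => [->|Hyv]; first by [].
    case: (z =P v) => [->|Hzv]; first by [].
    exact: (i5 I).
  rewrite !mk_x; try by apply/eqP.
  exact: (i5 I).
- rewrite (Ssum_m P1 P2) -(i8 I) /s' /move /= Hu; ring.
Qed.

Definition I7 (t : st) := forall x, unf t x -> exists y, reach (tptr t) x y /\ inV t y.

Lemma i7_easy : Inv s -> (forall p q, tptr s p q -> tptr s' p q) ->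
  (forall y, inV s y -> inV s' y) -> (forall x, unf s' x -> unf s x) -> I7 s'.
Proof.
move=> I He HV Hun x /Hun /(i7 I) [y [Hr Hy]]; exists y; split.
  exact: reach_mono He Hr.
exact: HV.
Qed.

Lemma unf_m' x : x \in visited s -> mk s u v <> MD -> mk s v u <> MD ->
  unf s' x -> unf s x.
Proof.
move=> Hxv H1 H2 [Hx [y [Hxy Hm]]]; split=> //.
case: (pair_cases u v x y) => [[? ?]|[[? ?]|[Ha Hb]]]; try subst x y.
- by exists v.
- by exists u; rewrite adj_sym.
- by exists y; split=> //; case: (@mk_oth x y Ha Hb) Hm => ->.
Qed.

Lemma vis_i2 (I : Inv s) x y : mk s x y <> M0 -> y \in visited s.
Proof. by case/(i2 I). Qed.

Lemma vis_i2' (I : Inv s) x y : mk s x y <> M0 -> x \in visited s.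
Proof. by case/(i2 I). Qed.

Lemma adj_i2 (I : Inv s) x y : mk s x y <> M0 -> adj x y.
Proof. by case/(i2 I). Qed.

Lemma nh_u : nh s' u + 1 = nh s u.
Proof. by have := nh_m u; rewrite eqxx (negbTE vu_neq) addn0. Qed.

Lemma nh_v : nh s' v = nh s v + 1.
Proof. by have := nh_m v; rewrite eqxx (negbTE uv_neq) addn0. Qed.

Lemma row1_i7 : Inv s -> mk s u v = MB -> mu = MD -> mv = MD -> I7 s'.
Proof.
move=> I H1 Hmu Hmv.
have H2 : mk s v u = ME by have := i3 I u v Hadj; rewrite H1; case: (mk s v u).
have Hv : v \in visited s by apply: (@vis_i2 I u v); rewrite H1.
apply: i7_easy => //.
- move=> p q [Ha Hb].
  case: (pair_cases u v p q) => [[? ?]|[[? ?]|[Hc Hd]]]; try subst p q.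
  + by rewrite H1 in Ha.
  + by rewrite H1 in Hb.
  + by rewrite /tptr; case: (@mk_oth p q Hc Hd) => -> ->.
- move=> y [[z Hz]|Hlt].
  + case: (pair_cases u v z y) => [[? ?]|[[? ?]|[Hc Hd]]]; try subst z y.
    * by apply: (V'v I); rewrite Hmv.
    * by rewrite H2 in Hz.
    * by left; exists z; case: (@mk_oth z y Hc Hd) => ->.
  + case: (y =P u) => [Eyu|Hyu]; first subst y.
      right; have := nB_u; have := nh_u; move: Hlt; rewrite H1 Hmu /=; lia.
    case: (y =P v) => [->|Hyv]; first by apply: (V'v I); rewrite Hmv.
    by right; rewrite nBnh_oth //; apply/eqP.
- move=> x; apply: unf_m => //; by [rewrite H1 | rewrite H2].
Qed.

Lemma row3_i7 : Inv s -> mk s u v = M0 -> mu = ME -> mv = MB -> v \in visited s ->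
  I7 s'.
Proof.
move=> I H1 Hmu Hmv Hv.
have H2 : mk s v u = M0 by have := i3 I u v Hadj; rewrite H1; case: (mk s v u).
apply: i7_easy => //.
- move=> p q [Ha Hb].
  case: (pair_cases u v p q) => [[? ?]|[[? ?]|[Hc Hd]]]; try subst p q.
  + by rewrite H1 in Ha.
  + by rewrite H2 in Ha.
  + by rewrite /tptr; case: (@mk_oth p q Hc Hd) => -> ->.
- move=> y [[z Hz]|Hlt].
  + case: (pair_cases u v z y) => [[? ?]|[[? ?]|[Hc Hd]]]; try subst z y.
    * by rewrite H1 in Hz.
    * by rewrite H2 in Hz.
    * by left; exists z; case: (@mk_oth z y Hc Hd) => ->.
  + case: (y =P u) => [->|Hyu].
      by left; exists v; rewrite mk_vu.
    case: (y =P v) => [Eyv|Hyv]; first subst y.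
      right; have := nB_v; have := nh_v; move: Hlt; rewrite H2 Hmv /=; lia.
    by right; rewrite nBnh_oth //; apply/eqP.
- move=> x; apply: unf_m => //; by [rewrite H1 | rewrite H2].
Qed.

Lemma row4_i7 : Inv s -> mk s u v = M0 -> mu = ME -> mv = MF -> I7 s'.
Proof.
move=> I H1 Hmu Hmv.
have H2 : mk s v u = M0 by have := i3 I u v Hadj; rewrite H1; case: (mk s v u).
have He : forall p q, tptr s p q -> tptr s' p q.
  move=> p q [Ha Hb].
  case: (pair_cases u v p q) => [[? ?]|[[? ?]|[Hc Hd]]]; try subst p q.
  + by rewrite H1 in Ha.
  + by rewrite H2 in Ha.
  + by rewrite /tptr; case: (@mk_oth p q Hc Hd) => -> ->.
have Vv : inV s' v by apply: (V'v I); rewrite Hmv.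
move=> x Hx; case: (x =P v) => [->|Hxv]; first by exists v; split=> //; apply: rrefl.
have Hx' : unf s x.
  apply: (@unf_m' x) => //; last by [rewrite H1 | rewrite H2].
  - by case: Hx; rewrite /s' /move /= in_setU1 => /orP [/eqP //|].
  - by rewrite H1.
case: (i7 I x Hx') => y [Hr Hy].
case: (y =P u) => [Eyu|Hyu].
  subst y; exists v; split=> //; apply: reach_snoc (reach_mono He Hr) _.
  by rewrite /tptr mk_uv mk_vu.
exists y; split; first exact: reach_mono He Hr.
case: Hy => [[z Hz]|Hlt].
  case: (pair_cases u v z y) => [[? ?]|[[? ?]|[Hc Hd]]]; try subst z y.
  + by rewrite H1 in Hz.
  + by rewrite H2 in Hz.
  + by left; exists z; case: (@mk_oth z y Hc Hd) => ->.
case: (y =P v) => [->//|Hyv].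
by right; rewrite nBnh_oth //; apply/eqP.
Qed.

Lemma Hu_common : Inv s -> mu = MD -> ~ has_mk adj s u MB -> ~ has_mk adj s u M0 ->
  (forall y, mk s u y = MF -> y = v) ->
  unf s' u -> inV s' u \/ exists c, [/\ tptr s' u c, unf s c & c <> u].
Proof.
move=> I Hmu nb n0 HF [_ [y [Huy Hm]]].
have Hyv : y != v by apply/eqP => E; subst y; rewrite mk_uv Hmu in Hm.
have Hyu : y != u by rewrite eq_sym adj_neq.
have Hyu2 : mk s' y u = mk s y u by rewrite mk_x.
rewrite mk_u (negbTE Hyv) in Hm.
case E: (mk s u y) Hm => // _.
- by case: (@nohas s u M0 y n0 Huy).
- have := i3 I u y Huy; rewrite E; case E2: (mk s y u) => // _.
    by left; left; exists y; rewrite Hyu2 E2.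
  right; exists y; split.
  + by rewrite /tptr mk_u (negbTE Hyv) E Hyu2 E2.
  + split; first by apply: (@vis_i2' I y u); rewrite E2.
    by exists u; rewrite adj_sym Huy E2.
  + exact/eqP.
- by case: (@nohas s u MB y nb Huy).
- by move/HF: E => E; rewrite E eqxx in Hyv.
Qed.

Lemma row5_i7 : Inv s -> mk s u v = MF -> mu = MD -> mv = MD ->
  ~ has_mk adj s u MB -> ~ has_mk adj s u M0 -> I7 s'.
Proof.
move=> I H1 Hmu Hmv nb n0.
have H2 : mk s v u = ME by have := i3 I u v Hadj; rewrite H1; case: (mk s v u).
have Hv : v \in visited s by apply: (@vis_i2 I u v); rewrite H1.
apply: (@generic_loss (tptr s) (tptr s') (inV s) (inV s') (unf s) (unf s') u v u (i7 I)).
- move=> p q [Ha Hb].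
  case: (pair_cases u v p q) => [[? ?]|[[? ?]|[Hc Hd]]]; try subst p q.
  + by rewrite H1 in Ha.
  + by right.
  + by left; rewrite /tptr; case: (@mk_oth p q Hc Hd) => -> ->.
- move=> p q [Ha Hb].
  case: (pair_cases u v p q) => [[? ?]|[[? ?]|[Hc Hd]]]; try subst p q.
  + by rewrite mk_uv Hmu in Ha.
  + by rewrite mk_vu Hmv in Ha.
  + by case: (@mk_oth p q Hc Hd) Ha Hb => -> -> ? ?; split.
- move=> p [_ Hb]; split; last by apply/eqP; exact: vu_neq.
  exact: (i5 I) Hb H1.
- by left; apply: (V'v I); rewrite Hmv.
- move=> y [[z Hz]|Hlt].
  + case: (pair_cases u v z y) => [[? ?]|[[? ?]|[Hc Hd]]]; try subst z y.
    * by rewrite H1 in Hz.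
    * by rewrite H2 in Hz.
    * by left; left; exists z; case: (@mk_oth z y Hc Hd) => ->.
  + case: (y =P u) => [->|Hyu]; first by right.
    case: (y =P v) => [->|Hyv]; first by left; apply: (V'v I); rewrite Hmv.
    by left; right; rewrite nBnh_oth //; apply/eqP.
- move=> x; apply: unf_m => //; by [rewrite H1 | rewrite H2].
- apply: Hu_common => // y Hy; exact: (i5 I) Hy H1.
Qed.

Lemma row6_i7 : Inv s -> mk s u v = ME -> mu = MD -> mv = MD ->
  ~ has_mk adj s u MB -> ~ has_mk adj s u M0 -> ~ has_mk adj s u MF -> I7 s'.
Proof.
move=> I H1 Hmu Hmv nb n0 nf.
have H2 : mk s v u = MB \/ mk s v u = MF.
  by have := i3 I u v Hadj; rewrite H1; case: (mk s v u) => // _; [left|right].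
have H2' : mk s v u <> ME by case: H2 => ->.
have H2'' : mk s v u <> MD by case: H2 => ->.
have Hv : v \in visited s by apply: (@vis_i2 I u v); rewrite H1.
have noF : forall y, mk s u y <> MF.
  move=> y E; apply: (@nohas s u MF y nf) => //; apply: (adj_i2 I); by rewrite E.
apply: (@generic_loss (tptr s) (tptr s') (inV s) (inV s') (unf s) (unf s') u u v (i7 I)).
- move=> p q [Ha Hb].
  case: (pair_cases u v p q) => [[? ?]|[[? ?]|[Hc Hd]]]; try subst p q.
  + by right.
  + by rewrite Ha in H2'.
  + by left; rewrite /tptr; case: (@mk_oth p q Hc Hd) => -> ->.
- move=> p q [Ha Hb].
  case: (pair_cases u v p q) => [[? ?]|[[? ?]|[Hc Hd]]]; try subst p q.
  + by rewrite mk_uv Hmu in Ha.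
  + by rewrite mk_vu Hmv in Ha.
  + by case: (@mk_oth p q Hc Hd) Ha Hb => -> -> ? ?; split.
- by move=> p [_ Hb]; case: (noF _ Hb).
- by right.
- move=> y [[z Hz]|Hlt].
  + case: (pair_cases u v z y) => [[? ?]|[[? ?]|[Hc Hd]]]; try subst z y.
    * by rewrite H1 in Hz.
    * by right.
    * by left; left; exists z; case: (@mk_oth z y Hc Hd) => ->.
  + case: (y =P u) => [->|Hyu]; first by right.
    case: (y =P v) => [->|Hyv]; first by left; apply: (V'v I); rewrite Hmv.
    by left; right; rewrite nBnh_oth //; apply/eqP.
- move=> x; apply: unf_m => //; by rewrite H1.
- by apply: Hu_common => // y /noF.
Qed.

End Move.

Arguments move_Inv [s a u v mu mv].
Arguments Phi_m [s a u v mu mv].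
Arguments row1_i7 [s a u v mu mv].
Arguments row3_i7 [s a u v mu mv].
Arguments row4_i7 [s a u v mu mv].
Arguments row5_i7 [s a u v mu mv].
Arguments row6_i7 [s a u v mu mv].
Arguments i6_m [s a u v mu mv].
Arguments nh_pos [s a u v].
Arguments vis_i2 [s].
Arguments vis_i2' [s].
Arguments adj_i2 [s].

Lemma nh_halt s a y : ~~ halted s a -> nh (halt s a) y + (pos s a == y) = nh s y.
Proof. rewrite /nh /=; case: a => /= ->; rewrite ?andbT ?andbF; lia. Qed.

Lemma Phi_halt s a : ~~ halted s a -> Phi s < Phi (halt s a).
Proof. rewrite /Phi /=; case: a => /= /negbTE ->; lia. Qed.

Lemma halt_Inv s a : Inv s -> ~~ halted s a ->
  ~ has_mk adj s (pos s a) MB -> ~ has_mk adj s (pos s a) M0 ->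
  ~ has_mk adj s (pos s a) MF -> ~ has_mk adj s (pos s a) ME ->
  Inv (halt s a) /\ Phi s < Phi (halt s a).
Proof.
move=> I Hna nb n0 nf ne; set u := pos s a.
have allD : forall y, adj u y -> mk s u y = MD.
  move=> y Huy; case E: (mk s u y) => //.
  - by case: (@nohas s u M0 y n0 Huy).
  - by case: (@nohas s u ME y ne Huy).
  - by case: (@nohas s u MB y nb Huy).
  - by case: (@nohas s u MF y nf Huy).
have noF : forall y, mk s u y <> MF.
  move=> y E; have Huy : adj u y by apply: (adj_i2 I u y); rewrite E.
  by have := allD y Huy; rewrite E.
have nhh : forall y, nh (halt s a) y + (u == y) = nh s y by move=> y; apply: nh_halt.
have nBu : nB s u = 0 by apply: nB0_inv.
split; last first.
  exact: Phi_halt.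
split; try exact: (i1 I); try exact: (i2 I); try exact: (i3 I); try exact: (i5 I); try exact: (i8 I).
- move=> y; have := nhh y; have := i6 I y; rewrite /nB /=; rewrite -/(nB s y).
  case: (u =P y) => [<-|_]; last by rewrite addn0 => ? ->.
  by rewrite nBu.
- apply: (@generic_loss (tptr s) (tptr s) (inV s) (inV (halt s a)) (unf s) (unf (halt s a)) u u u (i7 I)).
  + by move=> p q H; left.
  + by [].
  + by move=> p [_ Hb]; case: (noF _ Hb).
  + by right.
  + move=> y [[z Hz]|Hlt]; first by left; left; exists z.
    case: (u =P y) => [<-|Hy]; first by right.
    left; right; have := nhh y; move/eqP/negbTE: Hy => ->; rewrite addn0 => ->.
    exact: Hlt.
  + by [].
  + by move=> [_ [y [Huy]]]; rewrite allD.
Qed.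

Lemma step_Inv a s s' : Inv s -> step adj w a s s' ->
  [/\ Inv s', Phi s <= Phi s', (~~ halted s a -> Phi s < Phi s') &
      (forall b, halted s b -> halted s' b)].
Proof.
move=> I; case.
- by move=> Hh; split=> //; rewrite Hh.
- move=> v Hna Hadj H1.
  have H2 : mk s v (pos s a) = ME by have := i3 I _ _ Hadj; rewrite H1; case: (mk s v _).
  have P1 : phase MD = (phase (mk s (pos s a) v)).+1 by rewrite H1.
  have P2 : phase MD = (phase (mk s v (pos s a))).+1 by rewrite H2.
  have Hp := Phi_m erefl Hadj Hna I P1 P2.
  split; [|exact: ltnW|by []|by move=> b].
  apply: (move_Inv erefl Hadj I) => //.
  + apply: (i6_m erefl Hadj Hna I); rewrite ?H1 ?H2 /=; have := i6 I (pos s a); have := i6 I v; lia.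
  + exact: (row1_i7 erefl Hadj Hna I H1).
- move=> v Hna nb Hadj H1 H2.
  by have := i3 I _ _ Hadj; rewrite H1 H2.
- move=> v Hna nb Hadj H1 _ Hv.
  have H2 : mk s v (pos s a) = M0 by have := i3 I _ _ Hadj; rewrite H1; case: (mk s v _).
  have P1 : phase ME = (phase (mk s (pos s a) v)).+1 by rewrite H1.
  have P2 : phase MB = (phase (mk s v (pos s a))).+1 by rewrite H2.
  have Hp := Phi_m erefl Hadj Hna I P1 P2.
  split; [|exact: ltnW|by []|by move=> b].
  apply: (move_Inv erefl Hadj I) => //.
  + apply: (i6_m erefl Hadj Hna I); rewrite ?H1 ?H2 /=; have := @nB0_inv s _ I nb;
    have := nh_pos erefl Hadj Hna; have := i6 I v; lia.
  + exact: (row3_i7 erefl Hadj Hna I H1).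
- move=> v Hna nb Hadj H1 _ Hv.
  have H2 : mk s v (pos s a) = M0 by have := i3 I _ _ Hadj; rewrite H1; case: (mk s v _).
  have P1 : phase ME = (phase (mk s (pos s a) v)).+1 by rewrite H1.
  have P2 : phase MF = (phase (mk s v (pos s a))).+1 by rewrite H2.
  have Hp := Phi_m erefl Hadj Hna I P1 P2.
  split; [|exact: ltnW|by []|by move=> b].
  apply: (move_Inv erefl Hadj I) => //.
  + move=> _ z E; move: Hv; rewrite (vis_i2' I v z) //; by rewrite E.
  + apply: (i6_m erefl Hadj Hna I); rewrite ?H1 ?H2 /=; have := @nB0_inv s _ I nb;
    have := nh_pos erefl Hadj Hna; have := i6 I v; lia.
  + exact: (row4_i7 erefl Hadj Hna I H1).
- move=> v Hna nb n0 Hadj H1.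
  have H2 : mk s v (pos s a) = ME by have := i3 I _ _ Hadj; rewrite H1; case: (mk s v _).
  have P1 : phase MD = (phase (mk s (pos s a) v)).+1 by rewrite H1.
  have P2 : phase MD = (phase (mk s v (pos s a))).+1 by rewrite H2.
  have Hp := Phi_m erefl Hadj Hna I P1 P2.
  split; [|exact: ltnW|by []|by move=> b].
  apply: (move_Inv erefl Hadj I) => //.
  + apply: (i6_m erefl Hadj Hna I); rewrite ?H1 ?H2 /=; have := @nB0_inv s _ I nb;
    have := nh_pos erefl Hadj Hna; have := i6 I v; lia.
  + exact: (row5_i7 erefl Hadj Hna I H1).
- move=> v Hna nb n0 nf Hadj H1.
  have H2 : mk s v (pos s a) = MB \/ mk s v (pos s a) = MF.
    by have := i3 I _ _ Hadj; rewrite H1; case: (mk s v _) => // _; [left|right].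
  have P1 : phase MD = (phase (mk s (pos s a) v)).+1 by rewrite H1.
  have P2 : phase MD = (phase (mk s v (pos s a))).+1 by case: H2 => ->.
  have Hp := Phi_m erefl Hadj Hna I P1 P2.
  split; [|exact: ltnW|by []|by move=> b].
  apply: (move_Inv erefl Hadj I) => //.
  + apply: (i6_m erefl Hadj Hna I); rewrite ?H1 /=; have := @nB0_inv s _ I nb;
    have := nh_pos erefl Hadj Hna; have := i6 I v; lia.
  + exact: (row6_i7 erefl Hadj Hna I H1).
- move=> Hna nb n0 nf ne.
  have [Hi Hp] := @halt_Inv s a I Hna nb n0 nf ne.
  split=> //; first exact: ltnW.
  by move=> b; rewrite /halt /=; case: (b == a).
Qed.

Arguments step_Inv [a s s'].

Lemma init_Inv start : Inv (init R start).
Proof.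
split.
- by move=> b; rewrite /= set11.
- by [].
- by [].
- by [].
- by move=> u; rewrite /nB big1.
- move=> x [Hx _]; move: Hx; rewrite /= in_set1 => /eqP ->.
  exists start; split; first exact: rrefl.
  by right; rewrite /nB big1 // /nh /= eqxx.
- rewrite /Ssum big1 /= ?mulr0 // => x _; by rewrite /= mulr0.
Qed.

Lemma sum_pairs :
  (\sum_(x : T * T | adj x.1 x.2) w [set x.1; x.2] = 2 * total_weight adj w)%R.
Proof.
rewrite /total_weight /edge_set.
rewrite (eq_bigl (fun i : T * T => i \in [set x : T * T | adj x.1 x.2])); last by move=> x; rewrite inE.
rewrite (@partition_big_imset _ _ _ _ _ (fun x : T * T => [set x.1; x.2]) [set x : T * T | adj x.1 x.2]) /=.
rewrite big_distrr /=; apply: eq_bigr => j /imsetP [[p q]]; rewrite inE /= => Hpq ->.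
rewrite (eq_bigr (fun _ => w [set p; q])) => [|i /andP [_ /eqP ->] //].
rewrite (eq_bigl (mem [set (p, q); (q, p)])) => [|[x y] /=]; last first.
  rewrite in_set2 !xpair_eqE inE /=; apply/idP/idP.
  - move=> /andP [Hxy /eqP E].
    have Hx : x \in [set p; q] by rewrite -E set21.
    have Hy : y \in [set p; q] by rewrite -E set22.
    have Nxy := adj_neq Hxy.
    move: Hx Hy; rewrite !in_set2.
    case/orP=> /eqP Ex; case/orP=> /eqP Ey; subst.
    + by rewrite eqxx in Nxy.
    + by rewrite !eqxx.
    + by rewrite !eqxx orbT.
    + by rewrite eqxx in Nxy.
  - case/orP => /andP [/eqP -> /eqP ->]; first by rewrite Hpq eqxx.
    by rewrite adj_sym Hpq setUC eqxx.
rewrite sumr_const cards2 xpair_eqE.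
have -> : (p == q) && (q == p) = false by rewrite (negbTE (adj_neq Hpq)).
by rewrite /= mulr2n; ring.
Qed.

Lemma cost_bound s : Inv s -> (forall u v, adj u v -> 0 < w [set u; v])%R ->
  (cost s <= 2 * total_weight adj w)%R.
Proof.
move=> I Hw.
have H : (Ssum s <= 2 * (2 * total_weight adj w))%R.
  rewrite -sum_pairs big_distrr /= /Ssum; apply: ler_sum => [[x y]] /= Hxy.
  rewrite mulrC; apply: ler_wpM2r; first exact: ltW (Hw _ _ Hxy).
  have : (phase (mk s x y) <= 2)%N by case: (mk s x y).
  by rewrite -(ler_nat R).
have := i8 I; lra.
Qed.

Lemma final_explored s : Inv s -> (forall b, halted s b) ->
  (forall x y : T, connect adj x y) ->
  forall u v, adj u v -> [set u; v] \in explored s.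
Proof.
move=> I Hh Hc.
have nh0 : forall y, nh s y = 0 by move=> y; rewrite /nh !Hh /= !andbF.
have noB : forall z y, mk s z y <> MB.
  by move=> z y /nB_pos; have := i6 I z; rewrite nh0; lia.
have allD : forall x y, x \in visited s -> adj x y -> mk s x y = MD.
  move=> x y Hx Hxy; apply: NNPP => HD.
  have [y' [_ [[z Hz]|Hlt]]] := i7 I x (conj Hx (ex_intro _ y (conj Hxy HD))).
    by case: (noB _ _ Hz).
  by move: Hlt; rewrite nh0.
have allvis : forall y, y \in visited s.
  move=> y; move/connectP: (Hc (pos s true) y) => [p Hp ->].
  elim: p (pos s true) (i1 I true) Hp => [//|z p IH] x Hx /= /andP [Hxz Hp].
  apply: IH Hp; apply: (vis_i2 I x z); by rewrite (allD x z Hx Hxz).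
move=> u v Huv; case: (i2 I u v) => //; by rewrite (allD u v (allvis u) Huv).
Qed.

Lemma terminates (exec : nat -> st) (sched : nat -> agent) start :
  exec 0 = init R start ->
  (forall n, step adj w (sched n) (exec n) (exec n.+1)) ->
  (forall (a : agent) (n : nat), exists2 m : nat, n <= m & sched m = a) ->
  (forall n, Inv (exec n)) /\ exists n, forall b, halted (exec n) b.
Proof.
move=> H0 Hst Hfair.
have Iv : forall n, Inv (exec n).
  elim=> [|n IH]; first by rewrite H0; apply: init_Inv.
  by case: (step_Inv IH (Hst n)).
split=> //.
have St := fun n => step_Inv (Iv n) (Hst n).
have mono : forall n k, Phi (exec n) <= Phi (exec (n + k)).
  move=> n; elim=> [|k IH]; first by rewrite addn0.
  rewrite addnS; case: (St (n + k)) => _ Hle _ _; exact: leq_trans IH Hle.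
have hmono : forall n k b, halted (exec n) b -> halted (exec (n + k)) b.
  move=> n; elim=> [|k IH] b Hb; first by rewrite addn0.
  rewrite addnS; case: (St (n + k)) => _ _ _ Hh; exact: Hh (IH _ Hb).
set B := \sum_(x : T * T) 2 + 1 + 1.
have bound : forall n, Phi (exec n) <= B.
  move=> n; rewrite /Phi /B; apply: leq_add; last by case: (halted _ false).
  apply: leq_add; last by case: (halted _ true).
  by apply: leq_sum => x _; case: (mk _ _ _).
have [N HN] : exists N, forall m, N <= m -> halted (exec m) (sched m).
  apply: NNPP => Hno.
  have : forall k, exists n, k <= Phi (exec n).
    elim=> [|k [n Hn]]; first by exists 0.
    have [m [Hnm Hh]] : exists m, n <= m /\ ~~ halted (exec m) (sched m).
      apply: NNPP => H; apply: Hno; exists n => m Hm.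
      by apply/negPn/negP => Hh; apply: H; exists m.
    exists m.+1; case: (St m) => _ _ Hlt _; have := Hlt Hh.
    have := mono n (m - n); rewrite subnKC //; lia.
  move/(_ B.+1) => [n]; have := bound n; lia.
case: (Hfair true N) => m1 Hm1 E1.
case: (Hfair false N) => m2 Hm2 E2.
exists (m1 + m2); case.
- by apply: hmono; rewrite -E1; apply: HN.
- by rewrite addnC; apply: hmono; rewrite -E2; apply: HN.
Qed.

End Proof.

Local Open Scope ring_scope.

Theorem proposition19 (R : realFieldType) (T : finType) (adj : rel T)
    (w : {set T} -> R) (start : T) :
  symmetric adj -> irreflexive adj ->
  (forall x y : T, connect adj x y) ->
  (forall u v : T, adj u v -> 0 < w [set u; v]) ->
  forall (exec : nat -> state R T) (sched : nat -> agent),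
    exec 0%N = init R start ->
    (forall n : nat, step adj w (sched n) (exec n) (exec n.+1)) ->
    (forall (a : agent) (n : nat), exists2 m : nat, (n <= m)%N & sched m = a) ->
    (exists n : nat, forall u v : T, adj u v -> [set u; v] \in explored (exec n)) /\
    (forall n : nat, cost (exec n) <= 2 * total_weight adj w).
Proof.
move=> Hsym Hirr Hc Hw exec sched H0 Hst Hfair.
have [Iv [n Hn]] := @terminates R T adj w Hsym Hirr exec sched start H0 Hst Hfair.
split.
  by exists n; apply: (@final_explored R T adj w _ (Iv n) Hn Hc).
by move=> m; apply: (@cost_bound R T adj w Hsym Hirr _ (Iv m) Hw).
Qed.
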